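(* If $D$ is a maximum independent set in a simple graph $G$, then $G$ has a matching that covers every vertex of $V(G)-D$. *)

(* Defs.v *)
From mathcomp Require Import all_boot.
Set Implicit Arguments. Unset Strict Implicit. Unset Printing Implicit Defensive.

Definition simple_graph (T : finType) (e : rel T) : Prop :=
  symmetric e /\ irreflexive e.

Definition independent (T : finType) (e : rel T) (S : {set T}) : Prop :=
  forall x y, x \in S -> y \in S -> ~~ e x y.

Definition maximum_independent (T : finType) (e : rel T) (D : {set T}) : Prop :=
  independent e D /\ forall S : {set T}, independent e S -> #|S| <= #|D|.

Definition is_matching (T : finType) (e : rel T) (M : {set {set T}}) : Prop :=
  (forall m, m \in M -> exists x y, e x y /\ m = [set x; y]) /\
  (forall m1 m2, m1 \in M -> m2 \in M -> m1 != m2 -> [disjoint m1 & m2]).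

Definition covers (T : finType) (M : {set {set T}}) (v : T) : Prop :=
  exists2 m, m \in M & v \in m.

(* Main.v *)
Require Import Defs.
From mathcomp Require Import all_boot.
From mathcomp Require Import zify.

Set Implicit Arguments. Unset Strict Implicit. Unset Printing Implicit Defensive.

Section Hall.
Variables (T : finType) (r : rel T).

Definition Nb (S D : {set T}) := [set d in D | [exists s in S, r s d]].

Lemma NbD S D : Nb S D \subset D.
Proof. by apply/subsetP => x; rewrite inE => /andP[]. Qed.

Lemma hall n : forall U D : {set T}, #|U| <= n ->
  (forall S : {set T}, S \subset U -> #|S| <= #|Nb S D|) ->
  exists f : T -> T, (forall u, u \in U -> f u \in D /\ r u (f u)) /\
    {in U &, injective f}.
Proof.
elim: n => [|n IH] U D hU hH.
  have U0 : U = set0 by apply/eqP; rewrite -cards_eq0; lia.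
  by exists id; split => [u|u v]; rewrite U0 inE.
case: (leqP #|U| n) => [hle|hlt]; first exact: IH.
case: (boolP [exists S : {set T}, [&& S \proper U, S != set0 & #|Nb S D| <= #|S|]]).
  move/existsP => [S /and3P [pSU S0 tight]].
  have sSU := proper_sub pSU. have cS := proper_card pSU.
  have [f1 [f1D f1i]] := IH S D ltac:(lia) (fun S' hS' => hH S' (subset_trans hS' sSU)).
  set D' := D :\: Nb S D.
  have H2 : forall S' : {set T}, S' \subset U :\: S -> #|S'| <= #|Nb S' D'|.
    move=> S' hS'.
    have hSS : S :|: S' \subset U.
      apply/subsetP => x; rewrite inE => /orP[xS|xS'].
        exact: (subsetP sSU).
      by move: (subsetP hS' x xS'); rewrite inE => /andP[].
    have h1 := hH _ hSS.
    have hdis : S :&: S' = set0.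
      apply/setP => x; rewrite !inE; apply/negP => /andP[xS xS'].
      by move: (subsetP hS' x xS'); rewrite inE xS.
    have h2 : #|S :|: S'| = #|S| + #|S'| by rewrite cardsU hdis cards0; lia.
    have hsub : Nb (S :|: S') D \subset Nb S D :|: Nb S' D'.
      apply/subsetP => x; rewrite inE => /andP[xD /existsP[s /andP[]]].
      rewrite inE => /orP[sS rsx|sS' rsx]; rewrite inE; apply/orP.
        by left; rewrite inE xD; apply/existsP; exists s; rewrite sS.
      case: (boolP (x \in Nb S D)) => hx; [by left | right].
      rewrite [x \in Nb S' _]inE [x \in D']inE hx xD /=; apply/existsP; exists s; by rewrite sS'.
    have h3 := subset_leq_card hsub.
    have h4 := cardsU (Nb S D) (Nb S' D').
    have h5 := hH _ sSU.
    lia.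
  have cUS : #|U :\: S| <= n.
    have := cardsD U S; rewrite (setIidPr sSU).
    have : 0 < #|S| by rewrite card_gt0.
    lia.
  have [f2 [f2D f2i]] := IH (U :\: S) D' cUS H2.
  exists (fun x => if x \in S then f1 x else f2 x); split.
    move=> u uU; case: ifP => uS; first exact: f1D.
    have uUS : u \in U :\: S by rewrite inE uS uU.
    have [h hr] := f2D u uUS; split => //.
    by move: h; rewrite inE => /andP[].
  have inN : forall u, u \in S -> f1 u \in Nb S D.
    move=> u uS; have [h hr] := f1D u uS.
    by rewrite inE h; apply/existsP; exists u; rewrite uS.
  have outN : forall u, u \in U -> u \notin S -> f2 u \notin Nb S D.
    move=> u uU uS; have uUS : u \in U :\: S by rewrite inE uS uU.
    have [h _] := f2D u uUS. by move: h; rewrite inE => /andP[].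
  move=> u v uU vU /=; case: ifP => uS; case: ifP => vS.
  - by apply: f1i.
  - move=> huv; have := outN v vU (negbT vS); by rewrite -huv inN.
  - move=> huv; have := outN u uU (negbT uS); by rewrite huv inN.
  - by apply: f2i; rewrite inE ?uS ?vS ?uU ?vU.
rewrite negb_exists => /forallP hB.
have hB' : forall S : {set T}, S \proper U -> S != set0 -> #|S| < #|Nb S D|.
  move=> S pS S0; have := hB S; rewrite pS S0 /=; lia.
have [u uU] : exists u, u \in U by apply/set0Pn; rewrite -card_gt0; lia.
have hu : 0 < #|Nb [set u] D|.
  have := hH [set u]; rewrite cards1 sub1set uU; by apply.
have [d] : exists d, d \in Nb [set u] D by apply/set0Pn; rewrite -card_gt0.
rewrite inE => /andP[dD /existsP[s /andP[]]]; rewrite inE => /eqP -> rud.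
have cU : #|U :\ u| <= n by have := cardsD1 u U; rewrite uU; lia.
have H2 : forall S : {set T}, S \subset U :\ u -> #|S| <= #|Nb S (D :\ d)|.
  move=> S hS; case: (eqVneq S set0) => [->|S0]; first by rewrite cards0.
  have pS : S \proper U.
    rewrite properEneq; apply/andP; split.
      apply/eqP => SU; move: (subsetP hS u); rewrite SU uU !inE eqxx.
      by move=> /(_ isT).
    by apply: subset_trans hS (subD1set _ _).
  have h1 := hB' S pS S0.
  have hsub : Nb S D \subset d |: Nb S (D :\ d).
    apply/subsetP => x; rewrite !inE => /andP[xD hx].
    by case: eqP => //= _; rewrite xD hx.
  have h2 := subset_leq_card hsub.
  have h3 := cardsU1 d (Nb S (D :\ d)).
  lia.
have [f2 [f2D f2i]] := IH (U :\ u) (D :\ d) cU H2.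
exists (fun x => if x == u then d else f2 x); split.
  move=> v vU; case: eqP => [->|/eqP vu]; first by [].
  have vUu : v \in U :\ u by rewrite !inE vu.
  have [h hr] := f2D v vUu; split => //; by move: h; rewrite !inE => /andP[].
have nd : forall v, v \in U -> v != u -> f2 v != d.
  move=> v vU vu; have vUu : v \in U :\ u by rewrite !inE vu.
  have [h _] := f2D v vUu; by move: h; rewrite !inE => /andP[].
move=> v w vU wU /=; case: eqP => [->|/eqP vu]; case: eqP => [->|/eqP wu] //.
- by move=> h; have := nd w wU wu; rewrite -h eqxx.
- by move=> h; have := nd v vU vu; rewrite h eqxx.
- by apply: f2i; rewrite !inE ?vu ?wu.
Qed.

End Hall.

Lemma disj_by (T : finType) (A B : {set T}) :
  (forall x, x \in A -> x \in B -> False) -> [disjoint A & B].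
Proof.
move=> h; rewrite disjoints_subset; apply/subsetP => x xA.
by rewrite inE; apply/negP => xB; exact: h x xA xB.
Qed.

Lemma main_aux (T : finType) (e : rel T) (D : {set T}) :
  simple_graph e -> maximum_independent e D -> forall n (U : {set T}),
  U \subset ~: D -> #|U| <= n ->
  exists M : {set {set T}}, is_matching e M /\
    (forall m, m \in M -> m \subset U :|: D) /\ (forall v, v \in U -> covers M v).
Proof.
move=> [hsym hirr] [hind hmax].
elim => [|n IH] U hUD hU.
  have U0 : U = set0 by apply/eqP; rewrite -cards_eq0; lia.
  exists set0; split; [split|split].
  - by move=> m; rewrite inE.
  - by move=> m1; rewrite inE.
  - by move=> m; rewrite inE.
  - by move=> w; rewrite U0 inE.
have nUD : forall x, x \in U -> x \in D -> False.
  by move=> x xU xD; move: (subsetP hUD x xU); rewrite inE xD.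
case: (boolP [exists u, exists v, [&& u \in U, v \in U & e u v]]).
  move=> /existsP[u /existsP[v /and3P[uU vU euv]]].
  have uv : u != v by apply/eqP => h; move: euv; rewrite h hirr.
  set U' := U :\ u :\ v.
  have cU' : #|U'| <= n.
    have h1 := cardsD1 u U; have h2 := cardsD1 v (U :\ u).
    rewrite uU in h1; rewrite !inE eq_sym uv vU in h2. rewrite /U'; lia.
  have sU' : U' \subset U.
    by apply/subsetP => x; rewrite !inE => /and3P[].
  have [M' [[hM1 hM2] [hM3 hM4]]] := IH U' (subset_trans sU' hUD) cU'.
  have notin : forall m x, m \in M' -> x \in m -> x \in U -> x != u /\ x != v.
    move=> m x mM xm xU; move: (subsetP (hM3 m mM) x xm); rewrite !inE.
    case/orP => [/and3P[-> -> _] //|xD]; exfalso; exact: nUD x xU xD.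
  have hdis : forall m, m \in M' -> [disjoint [set u; v] & m].
    move=> m mM; apply: disj_by => x; rewrite !inE => /orP[]/eqP -> xm.
      by have [] := notin m u mM xm uU; rewrite eqxx.
    by have [] := notin m v mM xm vU; rewrite eqxx.
  exists ([set u; v] |: M'); split; [split|split].
  - move=> m; rewrite in_setU1 => /orP[/eqP ->|mM]; first by exists u, v.
    exact: hM1.
  - move=> m1 m2; rewrite !in_setU1 => /orP[/eqP ->|m1M] /orP[/eqP ->|m2M].
    + by rewrite eqxx.
    + by move=> _; exact: hdis.
    + by move=> _; rewrite disjoint_sym; exact: hdis.
    + exact: hM2.
  - move=> m; rewrite in_setU1 => /orP[/eqP ->|mM].
      by apply/subsetP => x; rewrite !inE => /orP[]/eqP ->; rewrite ?uU ?vU.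
    apply: subset_trans (hM3 m mM) _; exact: setSU.
  - move=> w wU; case: (boolP ((w == u) || (w == v))) => hw.
      exists [set u; v]; first by rewrite !inE eqxx.
      by rewrite !inE.
    have wU' : w \in U' by rewrite !inE wU; move: hw; rewrite negb_or => /andP[-> ->].
    have [m mM wm] := hM4 w wU'.
    by exists m; rewrite // inE mM orbT.
rewrite negb_exists => /forallP hno.
have noedge : forall u v, u \in U -> v \in U -> ~~ e u v.
  move=> u v uU vU; have := hno u; rewrite negb_exists => /forallP /(_ v).
  by rewrite uU vU.
have hH : forall S : {set T}, S \subset U -> #|S| <= #|Nb e S D|.
  move=> S hS.
  set I := S :|: (D :\: Nb e S D).
  have indI : independent e I.
    have nb : forall x y, x \in S -> y \in D :\: Nb e S D -> ~~ e x y.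
      move=> x y xS; rewrite inE => /andP[hy yD].
      apply/negP => exy; move/negP: hy; apply; rewrite inE yD /=.
      apply/existsP; exists x; by rewrite xS.
    move=> x y; rewrite inE => /orP[xS|xR]; rewrite inE => /orP[yS|yR].
    - exact: noedge (subsetP hS x xS) (subsetP hS y yS).
    - exact: nb.
    - rewrite hsym; exact: nb.
    - by move: xR yR; rewrite !inE => /andP[_ xD] /andP[_ yD]; apply: hind.
  have h1 := hmax I indI.
  have hd : S :&: (D :\: Nb e S D) = set0.
    apply/setP => x; rewrite !inE; apply/negP => /and3P[xS _ xD].
    exact: nUD x (subsetP hS x xS) xD.
  have h2 := cardsU S (D :\: Nb e S D). rewrite hd cards0 in h2.
  have h3 := cardsD D (Nb e S D). rewrite (setIidPr (NbD _ _ _)) in h3.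
  have h4 := subset_leq_card (NbD e S D).
  rewrite /I in h1. lia.
have [f [fD fi]] := hall (n := #|U|) (leqnn _) hH.
exists [set [set u; f u] | u in U]; split; [split|split].
- move=> m /imsetP[u uU ->]; exists u, (f u); split => //; exact: (fD u uU).2.
- move=> m1 m2 /imsetP[u1 u1U ->] /imsetP[u2 u2U ->] hne.
  have u12 : u1 != u2 by apply/eqP => h; move: hne; rewrite h eqxx.
  apply: disj_by => x; rewrite !inE => /orP[]/eqP -> /orP[]/eqP h.
  + by move: u12; rewrite h eqxx.
  + by apply: (nUD u1 u1U); rewrite h; exact: (fD u2 u2U).1.
  + by apply: (nUD u2 u2U); rewrite -h; exact: (fD u1 u1U).1.
  + by move: u12; rewrite (fi _ _ u1U u2U h) eqxx.
- move=> m /imsetP[u uU ->]; apply/subsetP => x; rewrite !inE => /orP[]/eqP ->.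
    by rewrite uU.
  by rewrite (fD u uU).1 orbT.
- move=> u uU; exists [set u; f u]; first by apply/imsetP; exists u.
  by rewrite !inE eqxx.
Qed.

Theorem mainTheorem10 (T : finType) (e : rel T) (D : {set T}) :
  simple_graph e -> maximum_independent e D ->
  exists M : {set {set T}}, is_matching e M /\
    (forall v, v \notin D -> covers M v).
Proof.
move=> hs hD.
have [M [hM [_ hc]]] := main_aux hs hD (subxx (~: D)) (leqnn #|~: D|).
exists M; split => // v vD; apply: hc; by rewrite inE.
Qed.
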